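(* For fixed positive integers $m$ and $s$ there exist positive constants $c=c(m,s)$ and $C=C(m,s)$, independent of $n$, such that for all sufficiently large $n$, $$c\,n\le r_{\Delta}(K_{m,n};s)\le br_{\Delta}(K_{m,n};s)\le C\,n.$$
   Context: For graphs $H$ and $G$ and a positive integer $s$, write $H\xrightarrow{s} G$ if every coloring of the edges of $H$ with $s$ colors contains a monochromatic subgraph isomorphic to $G$. The degree Ramsey number is $r_{\Delta}(G;s)=\min\{\Delta(H): H\xrightarrow{s} G\}$ and the degree bipartite Ramsey number is $br_{\Delta}(G;s)=\min\{\Delta(H): H \text{ is bipartite and } H\xrightarrow{s} G\}$, where $\Delta(H)$ denotes the maximum degree of $H$. $K_{m,n}$ is the complete bipartite graph with parts of sizes $m$ and $n$. *)

(* Defs.v *)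
From HB Require Import structures.
From mathcomp Require Import all_boot all_order all_algebra.
From Stdlib Require Import ClassicalEpsilon.
Set Implicit Arguments. Unset Strict Implicit. Unset Printing Implicit Defensive.
Import Order.TTheory GRing.Theory Num.Theory.

Definition simple_graph (T : finType) (e : rel T) : Prop :=
  symmetric e /\ irreflexive e.

(* Maximum degree Delta(H) (0 for the empty graph). *)
Definition maxdeg (T : finType) (e : rel T) : nat :=
  \max_(v : T) #|[set w | e v w]|.

Definition bipartite (T : finType) (e : rel T) : Prop :=
  exists side : T -> bool, forall u v, e u v -> side u != side v.

(* H --s--> G : every s-colouring of the edges of H (a symmetric function on
   pairs of vertices; values on non-edges are irrelevant) contains a
   monochromatic (not necessarily induced) subgraph isomorphic to G, i.e. an
   injective vertex map phi sending every edge of G to an edge of H of one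
   fixed colour c. *)
Definition arrows (T : finType) (e : rel T) (s : nat)
    (U : finType) (g : rel U) : Prop :=
  forall col : T -> T -> 'I_s, (forall u v, col u v = col v u) ->
  exists (phi : U -> T) (c : 'I_s), injective phi /\
    forall x y, g x y -> e (phi x) (phi y) /\ col (phi x) (phi y) = c.

(* Minimum of a set of naturals (classical choice; arbitrary if no minimum). *)
Definition minnat (P : nat -> Prop) : nat :=
  epsilon (inhabits 0%N) (fun d => P d /\ forall d', P d' -> (d <= d')%N).

Definition rdeg (U : finType) (g : rel U) (s : nat) : nat :=
  minnat (fun d => exists (T : finType) (e : rel T),
            simple_graph e /\ arrows e s g /\ maxdeg e = d).

Definition brdeg (U : finType) (g : rel U) (s : nat) : nat :=
  minnat (fun d => exists (T : finType) (e : rel T),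
            simple_graph e /\ bipartite e /\ arrows e s g /\ maxdeg e = d).

Definition Kmn (m n : nat) : rel ('I_m + 'I_n)%type :=
  fun x y => match x, y with
             | inl _, inr _ => true
             | inr _, inl _ => true
             | _, _ => false
             end.

(* Main.v *)
Require Import Defs.
From HB Require Import structures.
From mathcomp Require Import all_boot all_order all_algebra.
From Stdlib Require Import Classical ClassicalEpsilon.
Set Implicit Arguments. Unset Strict Implicit.
Import Order.TTheory GRing.Theory Num.Theory.

Lemma minnat_spec (P : nat -> Prop) d0 : P d0 ->
  P (minnat P) /\ forall d', P d' -> (minnat P <= d')%N.
Proof.
move=> Pd0.
have : exists d, P d /\ forall d', P d' -> (d <= d')%N.
  elim: d0 {-2}d0 (leqnn d0) Pd0 => [|k IH] d Hd Pd.
    exists d; split => // d' _; move: Hd; rewrite leqn0 => /eqP ->; done.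
  case: (classic (exists d', P d' /\ (d' < d)%N)) => [[d' [Pd' lt]]|nex].
    by apply: (IH d') => //; rewrite -ltnS (leq_trans lt Hd).
  exists d; split => // d' Pd'; rewrite leqNgt; apply/negP => lt.
  by apply: nex; exists d'.
move=> ex; rewrite /minnat.
exact: (epsilon_spec (inhabits 0%N) _ ex).
Qed.

Lemma pigeon (A B : finType) (f : A -> B) k :
  (#|B| * k.-1 < #|A|)%N -> exists b, (k <= #|[set a | f a == b]|)%N.
Proof.
move=> H; apply: NNPP => nex.
have Hb : forall b, (#|[set a | f a == b]| <= k.-1)%N.
  move=> b; case: k {H nex} (nex) => [|k] /= nex; last first.
    by rewrite -ltnS ltnNge; apply/negP => Hk; apply: nex; exists b.
  by exfalso; apply: nex; exists b.
have Hsum : #|A| = (\sum_(b : B) #|[set a | f a == b]|)%N.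
  rewrite -sum1_card (partition_big f predT) //=; apply: eq_bigr => b _.
  by rewrite -sum1_card; apply: eq_bigl => a; rewrite inE.
move: H; rewrite Hsum ltnNge => /negP; apply.
rewrite -sum_nat_const; apply: leq_sum => b _; exact: Hb.
Qed.

Lemma lower (m n s : nat) (T : finType) (e : rel T) :
  (0 < m)%N -> (0 < s)%N -> arrows e s (@Kmn m n) -> (n <= maxdeg e)%N.
Proof.
move=> mpos spos Har.
have [phi [c [phiI Hphi]]] := Har (fun _ _ => Ordinal spos) (fun _ _ => erefl).
pose v := phi (inl (Ordinal mpos)).
apply: leq_trans (leq_bigmax v).
have -> : n = #|[set phi (inr i) | i : 'I_n]|.
  rewrite card_imset ?card_ord //.
  by move=> i j /phiI [].
apply: subset_leq_card; apply/subsetP => w /imsetP [i _ ->].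
by rewrite inE; case: (Hphi (inl (Ordinal mpos)) (inr i) erefl).
Qed.

Lemma Kmn_simple M N : simple_graph (@Kmn M N).
Proof. by split; [case=> x; case=> y | case]. Qed.

Lemma Kmn_bip M N : bipartite (@Kmn M N).
Proof. by exists (fun x => if x is inl _ then true else false); case=> x; case. Qed.

Lemma Kmn_deg M N : (maxdeg (@Kmn M N) <= M + N)%N.
Proof.
apply/bigmax_leqP => v _; apply: leq_trans (max_card _) _.
by rewrite card_sum !card_ord.
Qed.

Section Constr.
Variables (m s n : nat) (mpos : (0 < m)%N) (spos : (0 < s)%N) (npos : (0 < n)%N).
Definition MM := (s * m)%N.
Definition FF := ({ffun 'I_m -> 'I_MM} * 'I_s)%type.
Definition NN := (#|{: FF}| * n)%N.

Lemma MMpos : (0 < MM)%N. Proof. by rewrite muln_gt0 spos mpos. Qed.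

Lemma FFpos : (0 < #|{: FF}|)%N.
Proof. apply/card_gt0P; exists ([ffun=> Ordinal MMpos], Ordinal spos); done. Qed.

Lemma Kmn_arrows : arrows (@Kmn MM NN) s (@Kmn m n).
Proof.
move=> col colS.
pose prop (j : 'I_NN) (p : FF) :=
  injectiveb p.1 && [forall i, col (inl (p.1 i)) (inr j) == p.2].
have ex : forall j, exists p, prop j p.
  move=> j.
  have /(@pigeon _ _ (fun x : 'I_MM => col (inl x) (inr j)) m) [c Hc] :
     (#|{: 'I_s}| * m.-1 < #|{: 'I_MM}|)%N.
    rewrite card_ord card_ord /MM ltn_pmul2l //.
    by case: m mpos.
  pose g := fun i : 'I_m => enum_val (widen_ord Hc i).
  exists ([ffun i => g i], c); apply/andP; split.
    apply/injectiveP => i1 i2 /=; rewrite !ffunE.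
    by rewrite /g => /enum_val_inj /(congr1 val) /= E; apply: val_inj.
  apply/forallP => i /=; rewrite ffunE.
  by have := enum_valP (widen_ord Hc i); rewrite inE.
pose f j := xchoose (ex j).
have fP j : prop j (f j) := xchooseP (ex j).
have /(@pigeon _ _ f n) [[g c] Hb] : (#|{: FF}| * n.-1 < #|{: 'I_NN}|)%N.
  rewrite card_ord /NN ltn_pmul2l ?FFpos //.
  by case: n npos.
pose h := fun i : 'I_n => enum_val (widen_ord Hb i).
have hP i : f (h i) = (g, c).
  by have := enum_valP (widen_ord Hb i); rewrite inE => /eqP.
have gI : injective g.
  by have := fP (h (Ordinal npos)); rewrite hP => /andP [/injectiveP].
have gc i k : col (inl (g i)) (inr (h k)) = c.
  have := fP (h k); rewrite hP => /andP [_ /forallP /(_ i) /eqP]; done.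
exists (fun x => match x with inl i => inl (g i) | inr k => inr (h k) end), c.
split.
  case=> [i|i]; case=> [j|j] //= [] E.
  - by rewrite (gI _ _ E).
  - by move/enum_val_inj/(congr1 val): E => /= E; rewrite (val_inj E).
case=> [i|i]; case=> [j|j] //= _; split=> //.
by rewrite colS.
Qed.
End Constr.
Local Open Scope ring_scope.
Theorem theorem3 (m s : nat) : (0 < m)%N -> (0 < s)%N ->
  exists (c C : rat), 0 < c /\ 0 < C /\
    exists N : nat, forall n : nat, (N <= n)%N ->
      c * n%:R <= (rdeg (@Kmn m n) s)%:R /\
      (rdeg (@Kmn m n) s <= brdeg (@Kmn m n) s)%N /\
      (brdeg (@Kmn m n) s)%:R <= C * n%:R.
Proof.
move=> mpos spos.
exists 1, (MM m s + #|{: FF m s}|)%:R; split=> //; split.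
  by rewrite ltr0n addn_gt0 MMpos.
exists 1%N => n npos.
have [[T [e [Hs [Hb [Ha Hd]]]]] Hmin] := @minnat_spec
  (fun d => exists (T : finType) (e : rel T),
            simple_graph e /\ bipartite e /\ arrows e s (@Kmn m n) /\ maxdeg e = d) _
  (ex_intro _ _ (ex_intro _ (@Kmn (MM m s) (NN m s n))
     (conj (Kmn_simple _ _) (conj (Kmn_bip _ _) (conj (Kmn_arrows mpos spos npos) erefl))))).
have [[T' [e' [Hs' [Ha' Hd']]]] Hmin'] := @minnat_spec
  (fun d => exists (T : finType) (e : rel T),
            simple_graph e /\ arrows e s (@Kmn m n) /\ maxdeg e = d) _
  (ex_intro _ _ (ex_intro _ e (conj Hs (conj Ha Hd)))).
rewrite /rdeg /brdeg; split; [|split].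
- by rewrite mul1r ler_nat -Hd' (lower mpos spos Ha').
- by apply: Hmin'; exists T, e.
- rewrite -natrM ler_nat; apply: leq_trans (Hmin _ _) _.
    exists _, (@Kmn (MM m s) (NN m s n)).
    exact: (conj (Kmn_simple _ _) (conj (Kmn_bip _ _) (conj (Kmn_arrows mpos spos npos) erefl))).
  apply: leq_trans (Kmn_deg _ _) _.
  rewrite mulnDl /NN leq_add2r.
  by rewrite -{1}(muln1 (MM m s)) leq_mul2l npos orbT.
Qed.
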